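(* Let $(Q,\cdot)$ be a groupoid of order $n$ with elements ordered as $q_1,\dots,q_n$, which is $k$-translatable with respect to this ordering ($1\le k<n$) and contains a cancellable element. Then $Q$ is a quasigroup if and only if $\gcd(k,n)=1$.
   Context: An element $c$ is cancellable if $cx=cy\Rightarrow x=y$ and $xc=yc\Rightarrow x=y$. A finite groupoid with ordering $q_1,\dots,q_n$ is $k$-translatable with respect to this ordering if $q_i\cdot q_j=q_{i-1}\cdot q_{j-k}$ for all $i\in\{2,\dots,n\}$, $j\in\{1,\dots,n\}$, indices taken modulo $n$ in $\{1,\dots,n\}$. *)

(* Defs.v *)
From mathcomp Require Import all_boot.
Set Implicit Arguments. Unset Strict Implicit. Unset Printing Implicit Defensive.

(* Indices are 0-based: the paper's q_1..q_n are q 0 .. q (n-1), q : 'I_n -> T. *)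

Lemma ord_pos n (i : 'I_n) : 0 < n.
Proof. by case: i => m; case: n => // /ltnW. Qed.

(* ord_sub i k = the index (i - k) mod n, as an element of 'I_n *)
Definition ord_sub n (i : 'I_n) (k : nat) : 'I_n :=
  Ordinal (ltn_pmod (i + (n - k %% n)) (ord_pos i)).

Definition cancellable (T : Type) (op : T -> T -> T) (c : T) : Prop :=
  (forall x y, op c x = op c y -> x = y) /\ (forall x y, op x c = op y c -> x = y).

Definition quasigroup (T : Type) (op : T -> T -> T) : Prop :=
  forall a b : T, (exists! x, op a x = b) /\ (exists! y, op y a = b).

(* k-translatable w.r.t. the ordering q : q_i q_j = q_{i-1} q_{j-k}
   for paper indices i in {2..n}, i.e. 0-based i >= 1, j arbitrary *)
Definition k_translatable (T : Type) (op : T -> T -> T) (n : nat)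
    (q : 'I_n -> T) (k : nat) : Prop :=
  forall i j : 'I_n, 0 < (i : nat) ->
    op (q i) (q j) = op (q (ord_sub i 1)) (q (ord_sub j k)).

(* Main.v *)
Require Import Defs.
From mathcomp Require Import all_boot.
From mathcomp Require Import zify.
Local Set Implicit Arguments.
Local Unset Strict Implicit.

Lemma ord_subP n (j : 'I_n) m : (ord_sub j m + m) %% n = j.
Proof.
have n0 := ord_pos j.
rewrite /ord_sub /= modnDml.
have h := divn_eq m n. have hl : m %% n < n by rewrite ltn_mod.
rewrite {2}h.
have -> : j + (n - m %% n) + (m %/ n * n + m %% n) = (m %/ n).+1 * n + j.
  rewrite mulSn; lia.
by rewrite modnMDl modn_small.
Qed.

Lemma ord_sub_uniq n (x y : 'I_n) m : (x + m) %% n = (y + m) %% n -> x = y.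
Proof.
move=> h; apply: val_inj => /=.
by have /eqP := h; rewrite eqn_modDr => /eqP; rewrite !modn_small.
Qed.

Lemma ord_sub_mod n (j : 'I_n) m m' : m %% n = m' %% n -> ord_sub j m = ord_sub j m'.
Proof. by move=> h; apply: val_inj; rewrite /= h. Qed.

Lemma ord_sub_add n (j : 'I_n) a b : ord_sub (ord_sub j a) b = ord_sub j (a + b).
Proof.
apply: (@ord_sub_uniq _ _ _ (a + b)).
by rewrite ord_subP (addnC a b) addnA -modnDml !ord_subP.
Qed.

Lemma ord_sub_inj n (x y : 'I_n) m : ord_sub x m = ord_sub y m -> x = y.
Proof. by move=> h; apply: val_inj; rewrite /= -(ord_subP x m) -(ord_subP y m) h. Qed.

Lemma ord_sub_modeq n (j : 'I_n) m m' : ord_sub j m = ord_sub j m' -> m %% n = m' %% n.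
Proof.
move=> h; have := ord_subP j m; have := ord_subP j m'; rewrite h => <-.
by move/eqP; rewrite eqn_modDl => /eqP.
Qed.

Local Unset Implicit Arguments.
Theorem proposition8p8 (T : finType) (op : T -> T -> T) (n k : nat)
    (q : 'I_n -> T) :
  bijective q -> #|T| = n ->
  1 <= k < n ->
  k_translatable op q k ->
  (exists c : T, cancellable op c) ->
  (quasigroup op <-> gcdn k n = 1).
Proof.
move=> [qi qK qiK] _ /andP[k1 kn] tr [c [cl cr]].
have n0 : 0 < n by lia.
pose z : 'I_n := Ordinal n0.
pose g m := op (q z) (q m).
have key : forall (i j : 'I_n), op (q i) (q j) = g (ord_sub j (i * k)).
  move=> [i hi] j; elim: i hi j => [|i IH] hi j.
    have -> : Ordinal hi = z by apply: val_inj.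
    rewrite /g mul0n; congr (op _ (q _)).
    idtac.
    by apply: (@ord_sub_uniq _ _ _ 0); rewrite ord_subP addn0 modn_small.
  have hi' : i < n by lia.
  rewrite (tr (Ordinal hi) j) //.
  have -> : ord_sub (Ordinal hi) 1 = Ordinal hi'.
    apply: (@ord_sub_uniq _ _ _ 1); rewrite ord_subP /= addn1 modn_small //.
  by rewrite IH ord_sub_add mulSn.
set a := qi c.
have ca : c = q a by rewrite /a qiK.
have ginj : injective g.
  move=> m1 m2 h.
  have u1 : m1 = ord_sub (Ordinal (ltn_pmod (m1 + a * k) n0)) (a * k).
    by apply: (@ord_sub_uniq _ _ _ (a * k)); rewrite ord_subP.
  have u2 : m2 = ord_sub (Ordinal (ltn_pmod (m2 + a * k) n0)) (a * k).
    by apply: (@ord_sub_uniq _ _ _ (a * k)); rewrite ord_subP.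
  rewrite u1 u2 in h; rewrite u1 u2; congr ord_sub.
  apply: (can_inj qK); apply: cl; by rewrite ca !key.
have colinj : forall i i' : 'I_n, (i * k) %% n = (i' * k) %% n -> i = i'.
  move=> i i' h; apply: (can_inj qK); apply: cr; rewrite ca !key.
  by rewrite (ord_sub_mod _ h).
have gcd1 : gcdn k n = 1.
  apply/eqP; apply: contraT => hd.
  set d := gcdn k n.
  have d0 : 0 < d by rewrite gcdn_gt0 n0 orbT.
  have d1 : 1 < d by lia.
  have dk : d %| k by apply: dvdn_gcdl.
  have dn : d %| n by apply: dvdn_gcdr.
  have hlt : n %/ d < n by rewrite ltn_Pdiv.
  have hgt : 0 < n %/ d by rewrite divn_gt0 // dvdn_leq.
  have := colinj (Ordinal hlt) z.
  have e : (n %/ d) * k = n * (k %/ d).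
    by rewrite -{1}(divnK dk) mulnA mulnAC divnK.
  rewrite /= e mul0n modnMr mod0n => /(_ erefl) /(congr1 val) /=. lia.
split => // _ a0 b.
have linj : injective (op a0).
  move=> x y; rewrite -(qiK a0) -(qiK x) -(qiK y) !key => /ginj /ord_sub_inj ->.
  by [].
have rinj : injective (op^~ a0).
  move=> x y /=; rewrite -(qiK a0) -(qiK x) -(qiK y) !key => /ginj /ord_sub_modeq h.
  by rewrite (colinj _ _ h).
split.
- have [f fK Kf] := injF_bij linj.
  by exists (f b); split; [rewrite Kf | move=> x' <-; rewrite fK].
- have [f fK Kf] := injF_bij rinj.
  by exists (f b); split; [rewrite /= Kf | move=> x' <-; rewrite fK].
Qed.
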